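(* Let $G$ be a $k$-regular graph with $n$ vertices, where $n\geq 4k$, and let $x$ be a vertex of $G$. Then $x$ is adjacent to at most $\binom{k}{2}(n-2k)+\binom{k}{3}$ cotriangles of $G$. Moreover, if this bound is attained, then the connected component of $G$ containing $x$ is isomorphic to $K_{k,k}$.
   Context: All graphs are finite and simple. A cotriangle in $G$ is an independent set of three vertices of $G$. A vertex $x$ of $G$ is adjacent to a cotriangle $T$ if $x$ is adjacent in $G$ to at least two vertices of $T$. $K_{k,k}$ is the complete bipartite graph with both parts of size $k$. *)

(* Defs.v *)
From mathcomp Require Import all_boot.
Set Implicit Arguments. Unset Strict Implicit. Unset Printing Implicit Defensive.

Definition simple_graph (T : finType) (e : rel T) : Prop :=
  symmetric e /\ irreflexive e.

Definition nbhd (T : finType) (e : rel T) (v : T) : {set T} := [set w | e v w].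

Definition regular (T : finType) (e : rel T) (k : nat) : Prop :=
  forall v : T, #|nbhd e v| = k.

Definition cotriangle (T : finType) (e : rel T) (S : {set T}) : bool :=
  (#|S| == 3) && [forall u in S, forall v in S, ~~ e u v].

Definition adj_cotriangle (T : finType) (e : rel T) (x : T) (S : {set T}) : bool :=
  2 <= #|S :&: nbhd e x|.

Definition num_adj_cotriangles (T : finType) (e : rel T) (x : T) : nat :=
  #|[set S : {set T} | cotriangle e S && adj_cotriangle e x S]|.

Definition component (T : finType) (e : rel T) (x : T) : {set T} :=
  [set y | connect e x y].

(* The subgraph induced on C is isomorphic to K_{k,k}: a bijection
   f : 'I_k + 'I_k -> C such that f a, f b are adjacent iff a, b lie on
   different sides. *)
Definition iso_Kkk (T : finType) (e : rel T) (C : {set T}) (k : nat) : Prop :=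
  exists f : 'I_k + 'I_k -> T,
    [/\ injective f,
        forall y, y \in C <-> exists a, f a = y &
        forall a b, e (f a) (f b) = (is_inl a != is_inl b)].

(* Main.v *)
Require Import Defs.
From mathcomp Require Import all_boot zify.

Lemma iso_struct (T : finType) (e : rel T) (k : nat) (x : T) :
  simple_graph e -> 1 <= k -> regular e k ->
  (forall a b, a \in nbhd e x -> b \in nbhd e x -> ~~ e a b) ->
  (forall a b, a \in nbhd e x -> b \in nbhd e x -> nbhd e a = nbhd e b) ->
  iso_Kkk e (component e x) k.
Proof.
move=> [esy eirr] k1 reg indN eqN.
have inNb v y : (y \in nbhd e v) = e v y by rewrite inE.
set N := nbhd e x.
have cN : #|N| = k by apply: reg.
have [a0 a0N] : exists a0, a0 \in N by apply/card_gt0P; rewrite cN.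
set W := nbhd e a0.
have cW : #|W| = k by apply: reg.
have NW a : a \in N -> nbhd e a = W by move=> aN; apply: eqN.
have WN w : w \in W -> nbhd e w = N.
  move=> wW; apply/eqP; rewrite eq_sym eqEcard cN reg leqnn andbT.
  apply/subsetP => a aN; rewrite inNb esy -inNb NW //.
have disj y : y \in N -> y \in W -> False.
  by move=> yN; rewrite inNb; move: (indN a0 y a0N yN) => /negbTE ->.
have xW : x \in W by rewrite inNb esy -inNb.
pose fN (i : 'I_k) : T := enum_val (cast_ord (esym cN) i).
pose fW (i : 'I_k) : T := enum_val (cast_ord (esym cW) i).
have fNP i : fN i \in N by apply: enum_valP.
have fWP i : fW i \in W by apply: enum_valP.
exists (fun s => match s with inl i => fN i | inr j => fW j end); split.
- move=> [i|i] [j|j] /=.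
  + by move/enum_val_inj/cast_ord_inj => ->.
  + by move=> E; exfalso; apply: (disj (fN i)); rewrite // E.
  + by move=> E; exfalso; apply: (disj (fN j)); rewrite // -E.
  + by move/enum_val_inj/cast_ord_inj => ->.
- move=> y; rewrite inE; split.
  + move=> cxy.
    have clo : closed e (mem (N :|: W)).
      have H u v : e u v -> u \in N :|: W -> v \in N :|: W.
        move=> euv; rewrite !in_setU => /orP[uN|uW].
          by rewrite -(NW u uN) inNb euv orbT.
        by rewrite -(WN u uW) inNb euv.
      move=> u v euv; apply/idP/idP; first exact: H.
      by apply: H; rewrite esy.
    have := closed_connect clo cxy; rewrite in_setU xW orbT => /esym.
    rewrite in_setU => /orP[yN|yW].
      exists (inl (cast_ord cN (enum_rank_in yN y))).
      by rewrite /= /fN cast_ordK enum_rankK_in.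
    exists (inr (cast_ord cW (enum_rank_in yW y))).
    by rewrite /= /fW cast_ordK enum_rankK_in.
  + move=> [[i|i] <-].
      by apply: connect1; rewrite -inNb.
    apply: (connect_trans (y := a0)); apply: connect1; first by rewrite -inNb.
    by rewrite -inNb.
- move=> [i|i] [j|j] /=.
  + by apply/negbTE; apply: indN.
  + by have := fWP j; rewrite -(NW (fN i) (fNP i)) inNb.
  + by have := fWP i; rewrite -(NW (fN j) (fNP j)) inNb esy.
  + apply/negbTE; rewrite -inNb WN //; apply/negP => fN'.
    by apply: (disj (fW j)).
Qed.
Lemma arith1 (B C d k n : nat) : B + d + 1 <= k -> C + 2 * k = n + d -> 4 * k <= n ->
  B * C <= (k - 1) * (n - 2 * k).
Proof. move=> h1 h2 h3. nia. Qed.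
Lemma arith2 (B C d k n : nat) : B + d + 1 <= k -> C + 2 * k = n + d -> 4 * k <= n ->
  (k - 1) * (n - 2 * k) <= B * C -> d = 0.
Proof. move=> h1 h2 h3 h4. nia. Qed.

Lemma sum_eq_ptw (I : finType) (P : pred I) (g h : I -> nat) :
  (forall i, P i -> g i <= h i) ->
  \sum_(i | P i) h i <= \sum_(i | P i) g i -> forall i, P i -> g i = h i.
Proof.
move=> le sle i Pi; apply/eqP; rewrite eqn_leq le //=; rewrite leqNgt; apply/negP => lt.
move: sle; rewrite (bigD1 i) //= [X in _ <= X](bigD1 i) //=.
have : \sum_(j | P j && (j != i)) g j <= \sum_(j | P j && (j != i)) h j.
  by apply: leq_sum => j /andP[Pj _]; apply: le.
lia.
Qed.

Lemma indep_of {T : finType} {e : rel T} {S : {set T}} {u v} :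
  [forall u in S, forall v in S, ~~ e u v] -> u \in S -> v \in S -> ~~ e u v.
Proof. by move=> /forall_inP H uS vS; move/forall_inP: (H u uS) => /(_ v vS). Qed.

Lemma decomp (T : finType) (e : rel T) (x : T) (S : {set T}) :
  cotriangle e S -> adj_cotriangle e x S -> ~~ (S \subset nbhd e x) ->
  exists a b c, [/\ a \in nbhd e x, b \in nbhd e x, a != b, c \notin nbhd e x &
     [/\ ~~ e a b, ~~ e a c, ~~ e b c & S = [set a; b; c]]].
Proof.
set N := nbhd e x.
move=> /andP[/eqP c3 ind] adj nsub.
have ne3 : #|S :&: N| != 3.
  apply/negP => /eqP h; move/negP: nsub; apply; apply/setIidPl; apply/eqP.
  by rewrite eqEcard subsetIl h c3.
have c2 : #|S :&: N| == 2.
  have : #|S :&: N| <= 3 by rewrite -c3 subset_leq_card // subsetIl.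
  move: adj ne3; rewrite /adj_cotriangle -/N; lia.
have c1 : #|S :\: N| == 1.
  by move: (cardsID N S); rewrite c3 (eqP c2) => h; apply/eqP; lia.
move/cards2P: c2 => [a [b [ab eab]]].
move/cards1P: c1 => [c ec].
have aSN : a \in S :&: N by rewrite eab !inE eqxx.
have bSN : b \in S :&: N by rewrite eab !inE eqxx orbT.
have cSN : c \in S :\: N by rewrite ec !inE.
move: aSN bSN cSN; rewrite !in_setI in_setD => /andP[aS aN] /andP[bS bN] /andP[cN cS].
exists a, b, c; split => //.
split; [exact: (indep_of ind aS bS) | exact: (indep_of ind aS cS) |
  exact: (indep_of ind bS cS) | ].
by rewrite -{1}(setID S N) eab ec.
Qed.

Lemma vertex_cards (T : finType) (e : rel T) (k : nat) (x a : T) :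
  simple_graph e -> regular e k -> a \in nbhd e x ->
  #|[set b | [&& b \in nbhd e x, a != b & ~~ e a b]]| + #|nbhd e x :&: nbhd e a| + 1 <= k /\
  #|[set c | (c \notin nbhd e x) && ~~ e a c]| + 2 * k = #|T| + #|nbhd e x :&: nbhd e a|.
Proof.
move=> [esy eirr] reg aN.
set N := nbhd e x.
have cN : #|N| = k by apply: reg.
have cA : #|nbhd e a| = k by apply: reg.
set D := N :&: nbhd e a.
split.
  have aD : a \notin D by rewrite !inE eirr andbF.
  have sub : a |: D \subset N by rewrite subUset sub1set aN subsetIl.
  have : #|[set b | [&& b \in N, a != b & ~~ e a b]]| <= #|N :\: (a |: D)|.
    apply: subset_leq_card; apply/subsetP => b; rewrite !inE => /and3P[bN ab nab].
    by rewrite bN negb_or eq_sym ab /= nab.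
  rewrite cardsD (setIidPr sub) cardsU1 aD.
  have := subset_leq_card sub; rewrite cardsU1 aD cN; lia.
have -> : [set c | (c \notin N) && ~~ e a c] = ~: (N :|: nbhd e a).
  by apply/setP => c; rewrite !inE negb_or.
have := cardsC (N :|: nbhd e a); rewrite cardsU cN cA -/D.
have : #|D| <= k by rewrite -cN subset_leq_card // subsetIl.
lia.
Qed.

Arguments decomp {T e x S}.
Arguments vertex_cards {T e k x a}.
Arguments iso_struct {T e k x}.
Arguments arith1 {B C d k n}.
Arguments arith2 {B C d k n}.
Arguments sum_eq_ptw {I P g h}.

Theorem mainTheorem5 (T : finType) (e : rel T) (k : nat) (x : T) :
  simple_graph e -> 1 <= k -> regular e k -> 4 * k <= #|T| ->
  num_adj_cotriangles e x <= 'C(k, 2) * (#|T| - 2 * k) + 'C(k, 3) /\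
  (num_adj_cotriangles e x = 'C(k, 2) * (#|T| - 2 * k) + 'C(k, 3) ->
   iso_Kkk e (component e x) k).
Proof.
move=> sg k1 reg n4.
have [esy eirr] := sg.
have inNb v y : (y \in nbhd e v) = e v y by rewrite inE.
set n := #|T|.
set N := nbhd e x.
have cN : #|N| = k by apply: reg.
rewrite /num_adj_cotriangles.
set A := [set S : {set T} | cotriangle e S && adj_cotriangle e x S].
set A3 := A :&: [set S : {set T} | S \subset N].
set A2 := A :\: [set S : {set T} | S \subset N].
have cA : #|A| = #|A3| + #|A2| by rewrite cardsID.
have cA3 : #|A3| <= 'C(k, 3).
  rewrite -cN -cards_draws; apply: subset_leq_card; apply/subsetP => S.
  by rewrite !inE => /andP[/andP[/andP[c3 _] _] sN]; rewrite sN c3.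
pose P (t : T * (T * T)) := [&& e x t.1, e x t.2.1, t.1 != t.2.1, ~~ e x t.2.2 &
   [&& ~~ e t.1 t.2.1, ~~ e t.1 t.2.2 & ~~ e t.2.1 t.2.2]].
set O := [set t | P t].
set Rr := [set t : T * (T * T) | enum_rank t.1 < enum_rank t.2.1].
pose f (t : T * (T * T)) := [set t.1; t.2.1; t.2.2].
have dec S : S \in A2 -> exists a b c, [/\ P (a, (b, c)), P (b, (a, c)), a != b &
     [set a; b; c] = S /\ [set b; a; c] = S].
  rewrite !inE => /andP[nsub /andP[ct adj]].
  have [a [b [c [aN bN ab cNN [nab nac nbc ->]]]]] := decomp ct adj nsub.
  move: aN bN cNN; rewrite !inNb => aN bN cNN.
  exists a, b, c; split => //.
  - by rewrite /P /= aN bN ab cNN nab nac nbc.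
  - by rewrite /P /= aN bN eq_sym ab cNN esy nab nac nbc.
  - by split => //; apply/setP => z; rewrite !inE [(z == b) || _]orbC.
have sub1 : A2 \subset f @: (O :&: Rr).
  apply/subsetP => S /dec [a [b [c [Pa Pb ab [Sa Sb]]]]].
  case: (ltngtP (enum_rank a) (enum_rank b)) => [lt|gt|eq].
  - by apply/imsetP; exists (a, (b, c)); rewrite // !inE Pa lt.
  - by apply/imsetP; exists (b, (a, c)); rewrite // !inE Pb gt.
  - by move/ord_inj/enum_rank_inj: eq => abe; rewrite abe eqxx in ab.
have sub2 : A2 \subset f @: (O :\: Rr).
  apply/subsetP => S /dec [a [b [c [Pa Pb ab [Sa Sb]]]]].
  case: (ltngtP (enum_rank a) (enum_rank b)) => [lt|gt|eq].
  - by apply/imsetP; exists (b, (a, c)); rewrite // !inE Pb /= -leqNgt ltnW.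
  - by apply/imsetP; exists (a, (b, c)); rewrite // !inE Pa /= -leqNgt ltnW.
  - by move/ord_inj/enum_rank_inj: eq => abe; rewrite abe eqxx in ab.
have cO2 : #|A2| + #|A2| <= #|O|.
  rewrite -(cardsID Rr O) leq_add //.
    exact: leq_trans (subset_leq_card sub1) (leq_imset_card _ _).
  exact: leq_trans (subset_leq_card sub2) (leq_imset_card _ _).
pose Oa a := [set p : T * T | P (a, p)].
have sumO : #|O| = \sum_(a in N) #|Oa a|.
  have -> : #|O| = \sum_(t | P t) 1 by rewrite -sum1_card; apply: eq_bigl => t; rewrite inE.
  have -> : \sum_(t | P t) 1 = \sum_(a : T) \sum_(p : T * T | P (a, p)) 1.
    by rewrite pair_big_dep /=; apply: eq_bigl => -[a p].
  rewrite [in RHS]big_mkcond; apply: eq_bigr => a _.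
  rewrite -sum1_card; case: ifP => [_|/negbT]; first by apply: eq_bigl => p; rewrite inE.
  rewrite inNb => nxa.
  by rewrite big_pred0 // => p; rewrite /P /= (negbTE nxa).
pose X := (k - 1) * (n - 2 * k).
pose Ba a := [set b | [&& b \in N, a != b & ~~ e a b]].
pose Ca a := [set c | (c \notin N) && ~~ e a c].
have OaX a : a \in N -> Oa a \subset setX (Ba a) (Ca a).
  move=> aN; apply/subsetP => -[b c]; rewrite !inE /P /= => /and5P[_ xb ab xc /and3P[nab nac nbc]].
  by rewrite xb ab nab xc nac.
have BCX a : a \in N -> #|Ba a| * #|Ca a| <= X.
  move=> aN; have [h1 h2] := vertex_cards sg reg aN.
  by apply: arith1 h1 h2 n4.
have gX a : a \in N -> #|Oa a| <= X.
  move=> aN; apply: leq_trans (BCX a aN).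
  by rewrite -cardsX subset_leq_card // OaX.
have sumX : \sum_(a in N) X = 'C(k, 2) * 2 * (n - 2 * k).
  rewrite sum_nat_const cN /X.
  have := bin_ffact k 2; rewrite /= !ffactnS ffactn0 => ->.
  rewrite muln1 subn1 mulnA //.
have b2 : 'C(k, 2) * 2 = k * k.-1.
  by have := bin_ffact k 2; rewrite /= !ffactnS ffactn0 muln1.
have bound2 : #|A2| + #|A2| <= 'C(k, 2) * 2 * (n - 2 * k).
  by rewrite -sumX (leq_trans cO2) // sumO leq_sum.
split.
  rewrite cA; nia.
move=> eqA.
have geq : \sum_(a in N) X <= \sum_(a in N) #|Oa a|.
  rewrite -sumO sumX; apply: leq_trans cO2.
  move: eqA; rewrite cA; nia.
have gE a : a \in N -> #|Oa a| = X := sum_eq_ptw gX geq a.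
have key a : a \in N -> N :&: nbhd e a = set0 /\ Oa a = setX (Ba a) (Ca a).
  move=> aN; have [h1 h2] := vertex_cards sg reg aN.
  have le1 : #|Oa a| <= #|Ba a| * #|Ca a| by rewrite -cardsX subset_leq_card // OaX.
  have ge : X <= #|Ba a| * #|Ca a| by rewrite -(gE a aN).
  split; first by apply: cards0_eq; apply: (arith2 h1 h2 n4 ge).
  apply/eqP; rewrite eqEcard OaX //= cardsX (gE a aN); exact: BCX.
have indN a b : a \in N -> b \in N -> ~~ e a b.
  move=> aN bN; apply/negP => eab.
  have : b \in N :&: nbhd e a by rewrite inE bN inNb eab.
  by rewrite (key a aN).1 inE.
have subN a b : a \in N -> b \in N -> nbhd e b \subset nbhd e a.
  move=> aN bN; have [ab|ab] := eqVneq a b; first by rewrite ab.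
  apply/subsetP => c; rewrite !inNb => ebc; apply/negPn/negP => nac.
  have ncN : c \notin N by apply/negP => cN'; move: (indN b c bN cN'); rewrite ebc.
  have : (b, c) \in setX (Ba a) (Ca a).
    have nab := indN a b aN bN.
    move: bN ncN; rewrite !inNb => bN' ncN'.
    by rewrite !inE /= bN' ab nab ncN' nac.
  rewrite -(key a aN).2 inE /P /= => /and5P[_ _ _ _ /and3P[_ _]].
  by rewrite ebc.
apply: (iso_struct sg k1 reg indN) => a b aN bN.
by apply/eqP; rewrite eqEcard subN //= !reg leqnn.
Qed.
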